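(* Let $\omega>0$ be fixed and, for a time step $\tau>0$, set $\sigma=\sigma(\tau)=\omega\sqrt{\tau}$. Let $w:\mathbb{R}\to\mathbb{R}$ (the weighting function, depending on fixed parameters $\bm\theta$) be continuous and bounded away from zero, i.e. there exist constants $L,U$ with $0<L\le w(x)\le U$ for all $x\in\mathbb{R}$, and let $w$ be twice differentiable with bounded second derivative. For $x,y\in\mathbb{R}$ and $s>0$ define $$p_1(x\mid y,s,\bm\theta)=\frac{k_s(x;y)\,w(x)}{\int_{\mathbb{R}}k_s(z;y)\,w(z)\,\mathrm{d}z},\qquad p_2(x\mid y,s,\bm\theta)=\int_{\mathbb{R}}p_1(x\mid z,s,\bm\theta)\,p_1(z\mid y,s,\bm\theta)\,\mathrm{d}z,$$ where $k_s(\cdot;y)$ is the Gaussian density with mean $y$ and standard deviation $s$. Then the model is asymptotically robust of degree 2 with parameter transformation $g_2(\sigma,\bm\theta)=(\sqrt2\,\sigma,\bm\theta)$: writing $$p_2(x\mid y,\sigma(\tau),\bm\theta)=p_1(x\mid y,\sqrt2\,\sigma(\tau),\bm\theta)\,v(x,y;\tau),$$ there is a constant $C>0$ such that $|v(x,y;\tau)-1|\le C\tau$ for all $x,y\in\mathbb{R}$ and all $\tau>0$.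
   Context: The setting is a one-dimensional discrete-time Markov movement model with time step $\tau$, whose one-step transition density is a Gaussian movement kernel (standard deviation $\sigma(\tau)=\omega\sqrt\tau$) multiplied by a positive weighting function and renormalized. Asymptotic robustness of degree $n$ means: there is an injective parameter map $g_n$ and a function $v(x,y;\tau)>0$ with $v-1=\mathcal{O}(\tau)$ uniformly on $\mathbb{R}^2\times(0,\infty)$ such that $p_n(x\mid y,\bm\theta)=p_1(x\mid y,g_n(\bm\theta))\,v(x,y;\tau)$. *)

(* Defs.v *)
From Stdlib Require Import Reals.
From Coquelicot Require Import Coquelicot.
Open Scope R_scope.

Definition gauss (s y x : R) : R :=
  / (s * sqrt (2 * PI)) * exp (- (x - y) ^ 2 / (2 * s ^ 2)).

Definition int_R (f : R -> R) : R :=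
  RInt_gen f (Rbar_locally m_infty) (Rbar_locally p_infty).

Definition p1 (w : R -> R) (s x y : R) : R :=
  gauss s y x * w x / int_R (fun z => gauss s y z * w z).

Definition p2 (w : R -> R) (s x y : R) : R :=
  int_R (fun z => p1 w s x z * p1 w s z y).

(* Main.v *)
Require Import Defs.
From Stdlib Require Import Reals Lra.
From Coquelicot Require Import Coquelicot.
Open Scope R_scope.

Definition FM := Rbar_locally m_infty.
Definition FP := Rbar_locally p_infty.

Definition tailc (f : R -> R) (l : R) := forall eps, 0 < eps ->
  exists N, forall a b, a < -N -> N < b -> Rabs (RInt f a b - l) < eps.

Lemma ballR (x y e : R) : ball x e y <-> Rabs (y - x) < e.
Proof. reflexivity. Qed.

Lemma pack (f : R -> R) (l : R) : (forall x, continuous f x) -> tailc f l ->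
  is_RInt_gen f FM FP l.
Proof.
  intros Hc Ht. unfold is_RInt_gen.
  apply filterlimi_lim_ext with (f := fun ab => RInt f (fst ab) (snd ab)).
  - intros [a b]; apply (RInt_correct (V:=R_CompleteNormedModule)), (ex_RInt_continuous (V:=R_CompleteNormedModule)); intros; apply Hc.
  - apply filterlim_locally. intros [e He]. simpl.
    destruct (Ht e He) as [N HN].
    apply Filter_prod with (fun a => a < -N) (fun b => N < b).
    + exists (-N); auto.
    + exists N; auto.
    + intros a b Ha Hb. apply ballR. simpl. auto.
Qed.

Lemma unpack (f : R -> R) (l : R) : (forall x, continuous f x) -> is_RInt_gen f FM FP l -> tailc f l.
Proof.
  intros Hc H e He.
  assert (Hl : locally l (ball l (mkposreal e He))) by apply locally_ball.
  specialize (H _ Hl).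
  destruct H as [Q R0 [M1 HQ] [M2 HR] H].
  exists (Rabs M1 + Rabs M2). intros a b Ha Hb.
  destruct (H a b) as [y [Hy Hb']].
  - apply HQ. pose proof (Rle_abs (-M1)). rewrite Rabs_Ropp in H0. pose proof (Rabs_pos M2). lra.
  - apply HR. pose proof (Rle_abs M2). pose proof (Rabs_pos M1). lra.
  - simpl in Hy. rewrite (is_RInt_unique _ _ _ _ Hy). apply ballR in Hb'. exact Hb'.
Qed.


Lemma exR (f : R -> R) a b : (forall x, continuous f x) -> ex_RInt f a b.
Proof. intros; apply (ex_RInt_continuous (V:=R_CompleteNormedModule)); auto. Qed.

Lemma chas (f : R -> R) a b c : (forall x, continuous f x) ->
  RInt f a b = RInt f a c + RInt f c b.
Proof. intros H. symmetry. apply (RInt_Chasles (V:=R_CompleteNormedModule)); apply exR; auto. Qed.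



Lemma rswap (f : R -> R) a b : (forall x, continuous f x) -> RInt f b a = - RInt f a b.
Proof. intros H. rewrite <- (opp_RInt_swap (V:=R_CompleteNormedModule)). reflexivity. apply exR; auto. Qed.

Lemma atan_der c x : is_derive (fun u => c * atan u) x (c / (1 + x^2)).
Proof.
  unfold Rdiv. apply (is_derive_scal (fun u => atan u) x c (/ (1 + x^2))).
  apply is_derive_Reals. apply derivable_pt_lim_atan.
Qed.

Lemma rint_bound (f : R -> R) c : (forall x, continuous f x) ->
  (forall u, Rabs (f u) <= c / (1 + u^2)) ->
  forall p q, Rabs (RInt f p q) <= c * Rabs (atan q - atan p).
Proof.
  intros Hc Hb.
  assert (Hc0 : forall x, continuous (fun u => c / (1 + u^2)) x).
  { intro x. apply (ex_derive_continuous (fun u => c / (1 + u^2))). auto_derive.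
    nra. }
  assert (K : forall p q, p <= q -> Rabs (RInt f p q) <= c * Rabs (atan q - atan p)).
  { intros p q Hpq.
    assert (Hi : is_RInt (fun u => c / (1 + u^2)) p q (c * atan q - c * atan p)).
    { apply (is_RInt_derive (fun u => c * atan u)).
      - intros; apply atan_der.
      - intros; apply Hc0. }
    pose proof (norm_RInt_le f (fun u => c / (1 + u^2)) p q (RInt f p q) _ Hpq
       (fun x _ => Hb x) (RInt_correct f p q (exR f p q Hc)) Hi) as H.
    change norm with Rabs in H. simpl in H.
    assert (atan p <= atan q).
    { destruct (Req_dec p q). subst; lra. left; apply atan_increasing; lra. }
    rewrite (Rabs_right (atan q - atan p)) by lra. lra. }
  intros p q. destruct (Rle_dec p q). auto.
  rewrite rswap by auto. rewrite Rabs_Ropp, Rabs_minus_sym.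
  apply K; lra.
Qed.

Lemma atan_tail d : 0 < d -> exists N, 0 < N /\ PI / 2 - atan N < d.
Proof.
  intros Hd. pose proof PI_RGT_0.
  set (d' := Rmin (d/2) (PI/4)).
  assert (0 < d') by (unfold d'; apply Rmin_glb_lt; lra).
  assert (d' <= PI/4) by apply Rmin_r.
  assert (d' <= d/2) by apply Rmin_l.
  assert (Ht : 0 < tan d') by (apply tan_gt_0; lra).
  exists (/ tan d'). split. apply Rinv_0_lt_compat; auto.
  rewrite atan_inv by auto. rewrite atan_tan by lra. lra.
Qed.


Lemma tail_small c N p q : 0 <= c -> 0 < N ->
  ((N < p /\ N < q) \/ (p < -N /\ q < -N)) ->
  c * Rabs (atan q - atan p) <= c * (PI/2 - atan N).
Proof.
  intros Hc HN H. apply Rmult_le_compat_l; auto.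
  pose proof (atan_bound p). pose proof (atan_bound q).
  destruct H as [[Hp Hq]|[Hp Hq]].
  - pose proof (atan_increasing _ _ Hp). pose proof (atan_increasing _ _ Hq).
    apply Rabs_le; lra.
  - pose proof (atan_increasing _ _ Hp). pose proof (atan_increasing _ _ Hq).
    rewrite atan_opp in *. apply Rabs_le; lra.
Qed.

Lemma cmp (f : R -> R) c : (forall x, continuous f x) ->
  (forall u, Rabs (f u) <= c / (1 + u^2)) -> exists l, is_RInt_gen f FM FP l.
Proof.
  intros Hc Hb.
  assert (Hc0 : 0 <= c).
  { specialize (Hb 0). pose proof (Rabs_pos (f 0)).
    replace (1 + 0^2) with 1 in Hb by ring. lra. }
  assert (Hex : exists y, filterlim (fun ab : R * R => RInt f (fst ab) (snd ab))
                  (filter_prod FM FP) (locally y)).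
  { apply (filterlim_locally_cauchy (F := filter_prod FM FP)).
    intros [e He]. simpl.
    destruct (atan_tail (e / (4 * (c + 1)))) as [N [HN HNt]].
    { apply Rdiv_lt_0_compat; lra. }
    exists (fun ab => fst ab < -N /\ N < snd ab). split.
    - apply Filter_prod with (fun a => a < -N) (fun b => N < b).
      exists (-N); auto. exists N; auto. simpl; auto.
    - intros [u1 u2] [v1 v2] [H1 H2] [H3 H4]. apply ballR. simpl in *.
      assert (E : RInt f u1 u2 = RInt f u1 v1 + RInt f v1 v2 + RInt f v2 u2).
      { rewrite (chas f u1 u2 v1 Hc), (chas f v1 u2 v2 Hc). symmetry; apply Rplus_assoc. }
      pose proof (rint_bound f c Hc Hb u1 v1) as B1.
      pose proof (rint_bound f c Hc Hb v2 u2) as B2.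
      pose proof (tail_small c N u1 v1 Hc0 HN (or_intror (conj H1 H3))).
      pose proof (tail_small c N v2 u2 Hc0 HN (or_introl (conj H4 H2))).
      assert (c * (PI / 2 - atan N) <= c * (e / (4 * (c + 1)))).
      { apply Rmult_le_compat_l; lra. }
      assert (c * (e / (4 * (c + 1))) < e / 2).
      { unfold Rdiv. rewrite Rinv_mult.
        assert (0 < / (c+1)) by (apply Rinv_0_lt_compat; lra).
        assert (c * / (c+1) < 1).
        { apply (Rmult_lt_reg_r (c+1)). lra. rewrite Rmult_assoc, Rinv_l by lra. lra. }
        replace (c * (e * (/ 4 * / (c + 1)))) with ((c * / (c+1)) * (e/4)) by (unfold Rdiv; ring).
        assert (0 < e/4) by lra. nra. }
      assert (Rabs (RInt f u1 v1 + RInt f v2 u2) < e).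
      { eapply Rle_lt_trans. apply Rabs_triang. lra. }
      match goal with |- Rabs ?X < _ => replace X with (-(RInt f u1 v1 + RInt f v2 u2)) end.
      rewrite Rabs_Ropp; auto. rewrite E. unfold minus, plus, opp; simpl. ring. }
  destruct Hex as [y Hy]. exists y.
  unfold is_RInt_gen.
  apply filterlimi_lim_ext with (f := fun ab => RInt f (fst ab) (snd ab)).
  - intros [a b]; apply (RInt_correct (V:=R_CompleteNormedModule)), exR; auto.
  - exact Hy.
Qed.


Lemma cmul (f g : R -> R) x : continuous f x -> continuous g x -> continuous (fun y => f y * g y) x.
Proof. intros; apply (continuous_mult (K:=R_AbsRing) f g); auto. Qed.
Lemma cplus (f g : R -> R) x : continuous f x -> continuous g x -> continuous (fun y => f y + g y) x.
Proof. intros; apply (continuous_plus (V:=R_NormedModule) f g); auto. Qed.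
Lemma cminus (f g : R -> R) x : continuous f x -> continuous g x -> continuous (fun y => f y - g y) x.
Proof. intros; apply (continuous_minus (V:=R_NormedModule) f g); auto. Qed.
Lemma cconst (c x : R) : continuous (fun _ : R => c) x.
Proof. apply continuous_const. Qed.
Lemma clin (f : R -> R) s m x : (forall y, continuous f y) -> continuous (fun u => f (s * u + m)) x.
Proof.
  intros H. apply (continuous_comp (fun u => s * u + m) f).
  apply (ex_derive_continuous (fun u => s * u + m)). auto_derive; auto. apply H.
Qed.

Lemma gext (f g : R -> R) l : (forall x, f x = g x) -> is_RInt_gen f FM FP l -> is_RInt_gen g FM FP l.
Proof.
  intros H0 H1. apply (is_RInt_gen_ext (V:=R_NormedModule) f g l); auto.
  apply Filter_prod with (fun _ => True) (fun _ => True).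
  exists 0; auto. exists 0; auto. intros; apply H0.
Qed.

Lemma gle (f g : R -> R) lf lg : (forall x, continuous f x) -> (forall x, continuous g x) ->
  is_RInt_gen f FM FP lf -> is_RInt_gen g FM FP lg -> (forall x, f x <= g x) -> lf <= lg.
Proof.
  intros Cf Cg Hf Hg Hle.
  destruct (Rle_dec lf lg) as [|Hn]; auto. exfalso.
  set (e := (lf - lg)/2). assert (He : 0 < e) by (unfold e; lra).
  destruct (unpack f lf Cf Hf e He) as [N1 H1].
  destruct (unpack g lg Cg Hg e He) as [N2 H2].
  set (b := Rabs N1 + Rabs N2 + 1).
  assert (Hb1 : N1 < b) by (unfold b; pose proof (Rle_abs N1); pose proof (Rabs_pos N2); lra).
  assert (Hb2 : N2 < b) by (unfold b; pose proof (Rle_abs N2); pose proof (Rabs_pos N1); lra).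
  assert (Ha1 : -b < -N1) by lra. assert (Ha2 : -b < -N2) by lra.
  specialize (H1 _ _ Ha1 Hb1). specialize (H2 _ _ Ha2 Hb2).
  assert (RInt f (-b) b <= RInt g (-b) b).
  { apply RInt_le. pose proof (Rabs_pos N1); pose proof (Rabs_pos N2); unfold b; lra.
    apply exR; auto. apply exR; auto. intros; auto. }
  apply Rabs_lt_between in H1. apply Rabs_lt_between in H2. unfold e in *. lra.
Qed.

Lemma gopp (f : R -> R) l : is_RInt_gen f FM FP l -> is_RInt_gen (fun x => - f x) FM FP (- l).
Proof. intros H. apply (is_RInt_gen_opp (V:=R_NormedModule)) in H. exact H. Qed.

Lemma gscal (f : R -> R) k l : is_RInt_gen f FM FP l -> is_RInt_gen (fun x => k * f x) FM FP (k * l).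
Proof. intros H. apply (is_RInt_gen_scal (V:=R_NormedModule)) with (k:=k) in H. exact H. Qed.

Lemma gplus (f g : R -> R) lf lg : is_RInt_gen f FM FP lf -> is_RInt_gen g FM FP lg ->
  is_RInt_gen (fun x => f x + g x) FM FP (lf + lg).
Proof. intros H1 H2. exact (is_RInt_gen_plus (V:=R_NormedModule) _ _ _ _ H1 H2). Qed.

Lemma gminus (f g : R -> R) lf lg : is_RInt_gen f FM FP lf -> is_RInt_gen g FM FP lg ->
  is_RInt_gen (fun x => f x - g x) FM FP (lf - lg).
Proof. intros H1 H2. exact (is_RInt_gen_minus (V:=R_NormedModule) _ _ _ _ H1 H2). Qed.

Lemma gabs (f g : R -> R) lf lg : (forall x, continuous f x) -> (forall x, continuous g x) ->
  is_RInt_gen f FM FP lf -> is_RInt_gen g FM FP lg -> (forall x, Rabs (f x) <= g x) -> Rabs lf <= lg.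
Proof.
  intros Cf Cg Hf Hg Hle. apply Rabs_le. split.
  - assert (- lg <= lf).
    { apply (gle (fun x => - g x) f); auto.
      intro; apply (continuous_opp (V:=R_NormedModule) g); auto.
      apply gopp; auto. intros x; specialize (Hle x); apply Rabs_le_between in Hle; lra. }
    lra.
  - apply (gle f g); auto. intros x; specialize (Hle x); apply Rabs_le_between in Hle; lra.
Qed.

Lemma guniq (f : R -> R) l : is_RInt_gen f FM FP l -> RInt_gen f FM FP = l.
Proof. intros H. apply (is_RInt_gen_unique (V:=R_CompleteNormedModule)); auto. Qed.

Lemma gsub (f : R -> R) s m l : 0 < s -> (forall x, continuous f x) ->
  is_RInt_gen f FM FP l -> is_RInt_gen (fun u => s * f (s * u + m)) FM FP l.
Proof.
  intros Hs Cf Hf. apply pack.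
  { intro x. apply cmul. apply cconst. apply clin; auto. }
  intros e He. destruct (unpack f l Cf Hf e He) as [N HN].
  exists ((Rabs N + Rabs m) / s). intros a b Ha Hb.
  assert (E : RInt (fun u => s * f (s * u + m)) a b = RInt f (s * a + m) (s * b + m)).
  { apply (RInt_comp_lin (V:=R_CompleteNormedModule) f s m a b). apply exR; auto. }
  rewrite E. apply HN.
  - apply (Rmult_lt_compat_l s) in Ha; auto.
    replace (s * - ((Rabs N + Rabs m) / s)) with (- (Rabs N + Rabs m)) in Ha by (field; lra).
    pose proof (Rle_abs N). pose proof (Rle_abs m). pose proof (Rle_abs (-m)). rewrite Rabs_Ropp in H1. lra.
  - apply (Rmult_lt_compat_l s) in Hb; auto.
    replace (s * ((Rabs N + Rabs m) / s)) with (Rabs N + Rabs m) in Hb by (field; lra).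
    pose proof (Rle_abs N). pose proof (Rle_abs (-m)). rewrite Rabs_Ropp in H0. lra.
Qed.


Definition phi (u : R) := exp (- (u ^ 2) / 2).

Lemma phi_pos u : 0 < phi u.
Proof. apply exp_pos. Qed.

Lemma phi_cont x : continuous phi x.
Proof. apply (ex_derive_continuous phi). unfold phi. auto_derive. auto. Qed.

Lemma exp_ge1 x : 0 <= x -> 1 + x <= exp x.
Proof. intros H. destruct (Req_dec x 0). subst. rewrite exp_0. lra. left; apply exp_ineq1; auto. Qed.

Lemma phi_inv u : phi u = / exp (u^2/2).
Proof. unfold phi. rewrite <- exp_Ropp. f_equal. unfold Rdiv. rewrite Ropp_mult_distr_l. reflexivity. Qed.

Lemma phi_bd u : phi u <= 2 / (1 + u^2).
Proof.
  rewrite phi_inv. pose proof (exp_ge1 (u^2/2)). assert (0 <= u^2) by nra.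
  specialize (H ltac:(lra)).
  apply (Rle_trans _ (/ (1 + u^2/2))).
  apply Rinv_le_contravar; lra.
  replace (/ (1 + u^2 / 2)) with (2 * / (2 + u^2)) by (field; lra).
  unfold Rdiv. apply Rmult_le_compat_l. lra. apply Rinv_le_contravar; lra.
Qed.

Lemma phi2_bd u : u^2 * phi u <= 16 / (1 + u^2).
Proof.
  rewrite phi_inv. assert (0 <= u^2) by nra.
  assert (E : exp (u^2/2) = exp (u^2/4) * exp (u^2/4)) by (rewrite <- exp_plus; f_equal; field).
  pose proof (exp_ge1 (u^2/4) ltac:(lra)).
  assert (H2 : (1 + u^2/4) * (1 + u^2/4) <= exp (u^2/2)) by (rewrite E; nra).
  assert (0 < exp (u^2/2)) by apply exp_pos.
  apply (Rle_trans _ (u^2 / ((1 + u^2/4) * (1 + u^2/4)))).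
  - unfold Rdiv. apply Rmult_le_compat_l; auto. apply Rinv_le_contravar; nra.
  - apply (Rmult_le_reg_r ((1 + u^2/4) * (1 + u^2/4) * (1 + u^2))). nra.
    field_simplify; try nra.
Qed.

Definition J (h : R -> R) := RInt_gen (fun u => phi u * h u) FM FP.

Lemma Jex (h : R -> R) B : (forall x, continuous h x) -> (forall u, Rabs (h u) <= B) ->
  is_RInt_gen (fun u => phi u * h u) FM FP (J h).
Proof.
  intros Ch Hb.
  destruct (cmp (fun u => phi u * h u) (2 * B)) as [l Hl].
  - intro; apply cmul; auto; apply phi_cont.
  - intro u. rewrite Rabs_mult, (Rabs_right (phi u)) by (left; apply phi_pos).
    pose proof (phi_bd u). pose proof (phi_pos u). specialize (Hb u).
    pose proof (Rabs_pos (h u)).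
    apply (Rle_trans _ (phi u * B)). apply Rmult_le_compat_l; lra.
    replace (2 * B / (1 + u^2)) with (2 / (1 + u^2) * B) by (field; nra).
    apply Rmult_le_compat_r; lra.
  - unfold J. rewrite (guniq _ _ Hl). auto.
Qed.

Definition I0 := J (fun _ => 1).
Lemma I0_is : is_RInt_gen (fun u => phi u * 1) FM FP I0.
Proof. apply (Jex _ 1). intro; apply cconst. intro; rewrite Rabs_R1; lra. Qed.

Lemma I0_pos : 0 < I0.
Proof.
  set (e := exp (-1/2)). assert (He : 0 < e) by apply exp_pos.
  destruct (unpack _ _ (fun x => cmul _ _ x (phi_cont x) (cconst 1 x)) I0_is e He) as [N HN].
  set (b := Rabs N + 1).
  assert (N < b) by (unfold b; pose proof (Rle_abs N); lra).
  assert (1 <= b) by (unfold b; pose proof (Rabs_pos N); lra).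
  specialize (HN (-b) b ltac:(lra) ltac:(lra)).
  set (f := fun u => phi u * 1). assert (Cf : forall x, continuous f x).
  { intro x; apply cmul; [apply phi_cont | apply cconst]. }
  assert (E : RInt f (-b) b = RInt f (-b) (-1) + RInt f (-1) 1 + RInt f 1 b).
  { rewrite (chas f (-b) b (-1) Cf), (chas f (-1) b 1 Cf). symmetry; apply Rplus_assoc. }
  assert (0 <= RInt f (-b) (-1)).
  { apply RInt_ge_0. lra. apply exR; auto. intros; unfold f; pose proof (phi_pos x); lra. }
  assert (0 <= RInt f 1 b).
  { apply RInt_ge_0. lra. apply exR; auto. intros; unfold f; pose proof (phi_pos x); lra. }
  assert (2 * e <= RInt f (-1) 1).
  { apply (Rle_trans _ (RInt (fun _ => e) (-1) 1)).
    - rewrite RInt_const. unfold scal; simpl; unfold mult; simpl. lra.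
    - apply RInt_le. lra. apply exR; intro; apply cconst. apply exR; auto.
      intros x Hx. unfold f, phi, e. rewrite Rmult_1_r. apply exp_le_3 || idtac.
      destruct (Req_dec (-1/2) (-(x^2)/2)) as [Q|Q]. rewrite Q; lra.
      left; apply exp_increasing. assert (0 < (1-x)*(1+x)) by (apply Rmult_lt_0_compat; lra). assert (x^2 < 1) by nra. lra. }
  destruct HN as [y [Hy1 Hy2]] || idtac.
  assert (X : forall z, Rabs (z - I0) < e -> z = RInt f (-b) b -> 0 < I0).
  { intros z Hz Ez. subst z. apply Rabs_lt_between in Hz. lra. }
  exact (X _ HN eq_refl).
Qed.


Lemma phi_small e : 0 < e -> exists N, forall a, (a < -N \/ N < a) -> phi a < e.
Proof.
  intros He. exists (4 / e + 1). intros a Ha.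
  assert (HN : 1 <= 4 / e + 1) by (assert (0 < 4/e) by (apply Rdiv_lt_0_compat; lra); lra).
  assert (Hab : 4 / e + 1 < Rabs a).
  { destruct Ha. rewrite Rabs_left by lra. lra. rewrite Rabs_right by lra. lra. }
  assert (Ha2 : a^2 = Rabs a * Rabs a) by (rewrite <- pow2_abs; ring).
  assert (a^2 > 4/e + 1) by nra.
  apply (Rle_lt_trans _ _ _ (phi_bd a)).
  apply (Rmult_lt_reg_r (1 + a^2)). nra. unfold Rdiv. rewrite Rmult_assoc, Rinv_l by nra.
  assert (e * (4/e) = 4) by (field; lra). nra.
Qed.

Lemma I1_is : is_RInt_gen (fun u => phi u * u) FM FP 0.
Proof.
  assert (C : forall x, continuous (fun u => phi u * u) x).
  { intro; apply cmul. apply phi_cont. apply continuous_id. }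
  apply pack; auto. intros e He.
  destruct (phi_small (e/2)) as [N HN]. lra.
  exists N. intros a b Ha Hb.
  assert (H : is_RInt (fun u => phi u * u) a b (minus (- phi b) (- phi a))).
  { apply (is_RInt_derive (V := R_CompleteNormedModule) (fun u => - phi u) (fun u => phi u * u)).
    - intros x _. unfold phi. auto_derive; auto. replace (- (x * (x * 1)) * / 2) with (- x ^ 2 / 2) by (unfold Rdiv; ring). change RinvImpl.Rinv with Rinv. field.
    - intros; apply C. }
  rewrite (is_RInt_unique _ _ _ _ H).
  pose proof (HN a (or_introl Ha)). pose proof (HN b (or_intror Hb)).
  pose proof (phi_pos a). pose proof (phi_pos b).
  unfold minus, plus, opp; simpl. apply Rabs_lt_between. lra.
Qed.

Definition I2 := RInt_gen (fun u => phi u * u^2) FM FP.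
Lemma I2_is : is_RInt_gen (fun u => phi u * u^2) FM FP I2.
Proof.
  destruct (cmp (fun u => phi u * u^2) 16) as [l Hl].
  - intro; apply cmul. apply phi_cont. apply (ex_derive_continuous (fun u : R => u^2)); auto_derive; auto.
  - intro u. rewrite Rabs_right. rewrite Rmult_comm; apply phi2_bd.
    pose proof (phi_pos u). assert (0 <= u^2) by nra. apply Rle_ge, Rmult_le_pos; lra.
  - unfold I2. rewrite (guniq _ _ Hl). auto.
Qed.


Lemma mvt_bound (f df : R -> R) K : (forall x, is_derive f x (df x)) ->
  (forall x, Rabs (df x) <= K) -> forall a b, Rabs (f b - f a) <= K * Rabs (b - a).
Proof.
  intros Hd Hb a b.
  destruct (MVT_gen f a b df) as [c [_ Hc]].
  - intros; apply Hd.
  - intros; apply continuity_pt_filterlim. apply (ex_derive_continuous f). eexists; apply Hd.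
  - rewrite Hc, Rabs_mult. apply Rmult_le_compat_r. apply Rabs_pos. apply Hb.
Qed.

Definition Hyp (w : R -> R) (L U M : R) :=
  (forall x, continuous w x) /\ 0 < L /\ (forall x, L <= w x <= U) /\
  (forall x, ex_derive w x) /\ (forall x, ex_derive (Derive w) x) /\
  (forall x, Rabs (Derive (Derive w) x) <= M).


Lemma taylor w L U M : Hyp w L U M -> forall a b,
  Rabs (w b - w a - Derive w a * (b - a)) <= M * (b - a)^2.
Proof.
  intros [Cw [HL [HB [D1 [D2 HM]]]]] a b.
  destruct (MVT_gen w a b (Derive w)) as [c [Hc E]].
  - intros; apply Derive_correct, D1.
  - intros; apply continuity_pt_filterlim. apply Cw.
  - rewrite E.
    pose proof (mvt_bound (Derive w) (Derive (Derive w)) M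
      (fun x => Derive_correct _ x (D2 x)) HM a c) as H.
    replace (Derive w c * (b - a) - Derive w a * (b - a)) with ((Derive w c - Derive w a) * (b - a)) by ring.
    rewrite Rabs_mult.
    assert (Rabs (c - a) <= Rabs (b - a)).
    { unfold Rmin, Rmax in Hc. destruct (Rle_dec a b);
      [rewrite (Rabs_pos_eq (c-a)), (Rabs_pos_eq (b-a)) by lra
      | rewrite (Rabs_left1 (c-a)), (Rabs_left1 (b-a)) by lra]; lra. }
    assert (0 <= M) by (specialize (HM a); pose proof (Rabs_pos (Derive (Derive w) a)); lra).
    replace ((b - a)^2) with (Rabs (b - a) * Rabs (b - a)) by (rewrite <- pow2_abs; ring).
    apply (Rle_trans _ (M * Rabs (c - a) * Rabs (b - a))).
    apply Rmult_le_compat_r. apply Rabs_pos. auto.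
    rewrite Rmult_assoc. apply Rmult_le_compat_l; auto. apply Rmult_le_compat_r; auto. apply Rabs_pos.
Qed.


Lemma dw_bound w L U M : Hyp w L U M -> forall x, Rabs (Derive w x) <= U - L + M.
Proof.
  intros H x. pose proof (taylor w L U M H x (x+1)) as T.
  destruct H as [Cw [HL [HB _]]].
  replace (x + 1 - x) with 1 in T by ring. rewrite pow1, Rmult_1_r in T.
  assert (Rabs (w (x+1) - w x) <= U - L).
  { pose proof (HB x); pose proof (HB (x+1)). apply Rabs_le; lra. }
  replace (Derive w x) with ((w (x+1) - w x) - (w (x+1) - w x - Derive w x)) by ring.
  eapply Rle_trans. apply Rabs_triang. rewrite Rabs_Ropp. replace (1^2) with 1 in T by ring. lra.
Qed.

Lemma w_lip w L U M : Hyp w L U M -> forall a b, Rabs (w b - w a) <= (U - L + M) * Rabs (b - a).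
Proof.
  intros H. apply (mvt_bound w (Derive w)). intros; apply Derive_correct. apply H. apply (dw_bound w L U M H).
Qed.

Definition c0 := / sqrt (2 * PI).

Lemma sqrt2pi_pos : 0 < sqrt (2 * PI).
Proof. apply sqrt_lt_R0. pose proof PI_RGT_0. lra. Qed.

Lemma GA (f : R -> R) s m l : 0 < s -> (forall x, continuous f x) ->
  is_RInt_gen (fun u => phi u * f (s * u + m)) FM FP l ->
  is_RInt_gen (fun z => gauss s m z * f z) FM FP (c0 * l).
Proof.
  intros Hs Cf Hl.
  assert (Cg : forall x, continuous (fun u => phi u * f (s * u + m)) x).
  { intro; apply cmul. apply phi_cont. apply clin; auto. }
  pose proof (gsub _ (/ s) (- m / s) l (Rinv_0_lt_compat _ Hs) Cg Hl) as H.
  apply (gscal _ c0) in H.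
  eapply gext; [|exact H]. intro z. simpl.
  replace (s * (/ s * z + - m / s) + m) with z by (field; lra).
  unfold gauss, phi, c0. 
  replace (- (/ s * z + - m / s) ^ 2 / 2) with (- (z - m) ^ 2 / (2 * s ^ 2)) by (field; lra).
  pose proof sqrt2pi_pos. rewrite Rinv_mult. ring.
Qed.

Definition Z w s y := int_R (fun u => gauss s y u * w u).

Lemma Jconst a : is_RInt_gen (fun u => phi u * a) FM FP (a * I0).
Proof. eapply gext; [|apply (gscal _ a _ I0_is)]. intro; simpl; ring. Qed.

Lemma Jw_is w L U M s y : Hyp w L U M ->
  is_RInt_gen (fun u => phi u * w (s * u + y)) FM FP (J (fun u => w (s * u + y))).
Proof.
  intros H. destruct H as [Cw [HL [HB _]]]. apply (Jex _ U). intro; apply clin; auto.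
  intro u. pose proof (HB (s*u+y)). rewrite Rabs_pos_eq; lra.
Qed.

Lemma Zval w L U M s y : Hyp w L U M -> 0 < s -> Z w s y = c0 * J (fun u => w (s * u + y)).
Proof.
  intros H Hs. unfold Z, int_R. apply guniq. apply GA; auto. apply H. eapply Jw_is; eauto.
Qed.

Lemma Jle (h : R -> R) l a b : (forall x, continuous h x) -> is_RInt_gen (fun u => phi u * h u) FM FP l ->
  (forall x, a <= h x <= b) -> a * I0 <= l <= b * I0.
Proof.
  intros Ch Hl Hb. assert (Cp : forall c x, continuous (fun u => phi u * c) x).
  { intros; apply cmul. apply phi_cont. apply cconst. }
  assert (Ch' : forall x, continuous (fun u => phi u * h u) x) by (intros; apply cmul; auto; apply phi_cont).
  split.
  - apply (gle (fun u => phi u * a) (fun u => phi u * h u)); auto. apply Jconst.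
    intro x. apply Rmult_le_compat_l. left; apply phi_pos. apply Hb.
  - apply (gle (fun u => phi u * h u) (fun u => phi u * b)); auto. apply Jconst.
    intro x. apply Rmult_le_compat_l. left; apply phi_pos. apply Hb.
Qed.


Lemma cpow2 x : continuous (fun u : R => u ^ 2) x.
Proof. apply (ex_derive_continuous (fun u : R => u^2)); auto_derive; auto. Qed.

Lemma Jdev w L U M s y : Hyp w L U M -> 0 < s ->
  Rabs (J (fun u => w (s * u + y)) - w y * I0) <= M * s^2 * I2.
Proof.
  intros H Hs. pose proof H as [Cw [HL [HB [D1 [D2 HM]]]]].
  assert (HM0 : 0 <= M) by (specialize (HM 0); pose proof (Rabs_pos (Derive (Derive w) 0)); lra).
  set (R0 := fun u => w (s * u + y) - w y - Derive w y * s * u).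
  assert (CR : forall x, continuous R0 x).
  { intro x. unfold R0. apply cminus. apply cminus. apply clin; auto. apply cconst.
    apply cmul. apply cconst. apply continuous_id. }
  assert (BR : forall u, Rabs (R0 u) <= M * s^2 * u^2).
  { intro u. unfold R0. pose proof (taylor w L U M H y (s * u + y)) as T.
    replace (s * u + y - y) with (s * u) in T by ring.
    replace (Derive w y * s * u) with (Derive w y * (s * u)) by ring.
    replace (M * s^2 * u^2) with (M * (s * u)^2) by ring. exact T. }
  assert (CpR : forall x, continuous (fun u => phi u * R0 u) x) by (intro; apply cmul; auto; apply phi_cont).
  destruct (cmp (fun u => phi u * R0 u) (16 * (M * s^2))) as [lR HR]; auto.
  { intro u. rewrite Rabs_mult, (Rabs_pos_eq (phi u)) by (left; apply phi_pos).
    pose proof (phi2_bd u). pose proof (phi_pos u).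
    apply (Rle_trans _ (phi u * (M * s^2 * u^2))). apply Rmult_le_compat_l; auto; lra.
    replace (phi u * (M * s^2 * u^2)) with ((M * s^2) * (u^2 * phi u)) by ring.
    replace (16 * (M * s^2) / (1 + u^2)) with ((M * s^2) * (16 / (1 + u^2))) by (field; nra).
    apply Rmult_le_compat_l; auto. assert (0 <= s^2) by nra. nra. }
  assert (AR : Rabs lR <= M * s^2 * I2).
  { apply (gabs (fun u => phi u * R0 u) (fun u => M * s^2 * (phi u * u^2))); auto.
    intro; apply cmul. apply cconst. apply cmul. apply phi_cont. apply cpow2.
    apply gscal. apply I2_is.
    intro u. rewrite Rabs_mult, (Rabs_pos_eq (phi u)) by (left; apply phi_pos).
    pose proof (phi_pos u).
    replace (M * s^2 * (phi u * u^2)) with (phi u * (M * s^2 * u^2)) by ring.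
    apply Rmult_le_compat_l; auto; lra. }
  assert (HS : is_RInt_gen (fun u => phi u * w (s * u + y)) FM FP
                 (w y * I0 + (Derive w y * s) * 0 + lR)).
  { eapply gext; [|apply gplus; [apply gplus; [apply Jconst | apply gscal; apply I1_is] | exact HR]].
    intro u. simpl. unfold R0. ring. }
  unfold J in *. rewrite (guniq _ _ HS). assert (E : forall a b c : R, a + b * 0 + c - a = c) by (intros; ring). rewrite E.
  exact AR.
Qed.


Definition K := c0 * I0.
Lemma c0_pos : 0 < c0.
Proof. unfold c0. apply Rinv_0_lt_compat, sqrt2pi_pos. Qed.
Lemma K_pos : 0 < K.
Proof. unfold K. apply Rmult_lt_0_compat. apply c0_pos. apply I0_pos. Qed.

Lemma Zb w L U M s y : Hyp w L U M -> 0 < s -> K * L <= Z w s y <= K * U.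
Proof.
  intros H Hs. rewrite (Zval w L U M s y H Hs). pose proof H as [Cw [HL [HB _]]].
  destruct (Jle (fun u => w (s * u + y)) _ L U (fun x => clin w s y x Cw) (Jw_is w L U M s y H))
    as [A B]. intro; apply HB.
  pose proof c0_pos. unfold K. split; nra.
Qed.

Lemma Zd w L U M s y : Hyp w L U M -> 0 < s -> Rabs (Z w s y - K * w y) <= c0 * M * I2 * s^2.
Proof.
  intros H Hs. rewrite (Zval w L U M s y H Hs). pose proof (Jdev w L U M s y H Hs).
  pose proof c0_pos. unfold K.
  replace (c0 * J (fun u => w (s * u + y)) - c0 * I0 * w y) with (c0 * (J (fun u => w (s * u + y)) - w y * I0)) by ring.
  rewrite Rabs_mult, Rabs_pos_eq by lra.
  replace (c0 * M * I2 * s^2) with (c0 * (M * s^2 * I2)) by ring.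
  apply Rmult_le_compat_l; lra.
Qed.

Lemma Zlip w L U M s y y' : Hyp w L U M -> 0 < s ->
  Rabs (Z w s y' - Z w s y) <= K * (U - L + M) * Rabs (y' - y).
Proof.
  intros H Hs. rewrite (Zval w L U M s y H Hs), (Zval w L U M s y' H Hs).
  pose proof H as [Cw [HL [HB _]]].
  set (D := U - L + M).
  assert (HD : is_RInt_gen (fun u => phi u * (w (s * u + y') - w (s * u + y))) FM FP
     (J (fun u => w (s * u + y')) - J (fun u => w (s * u + y)))).
  { eapply gext; [|apply gminus; apply (Jw_is w L U M)]; auto. intro; simpl; ring. }
  assert (A : Rabs (J (fun u => w (s * u + y')) - J (fun u => w (s * u + y))) <= D * Rabs (y' - y) * I0).
  { eapply (gabs _ (fun u => phi u * (D * Rabs (y' - y)))); [ | | exact HD | apply Jconst | ].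
    - intro; apply cmul. apply phi_cont. apply cminus; apply clin; auto.
    - intro; apply cmul. apply phi_cont. apply cconst.
    - intro u. cbv beta. rewrite Rabs_mult, (Rabs_pos_eq (phi u)) by (left; apply phi_pos).
      apply Rmult_le_compat_l. left; apply phi_pos.
      pose proof (w_lip w L U M H (s * u + y) (s * u + y')).
      replace (s * u + y' - (s * u + y)) with (y' - y) in H0 by ring. exact H0. }
  pose proof c0_pos. unfold K.
  replace (c0 * J (fun u => w (s * u + y')) - c0 * J (fun u => w (s * u + y)))
    with (c0 * (J (fun u => w (s * u + y')) - J (fun u => w (s * u + y)))) by ring.
  rewrite Rabs_mult, (Rabs_pos_eq c0) by lra.
  replace (c0 * I0 * D * Rabs (y' - y)) with (c0 * (D * Rabs (y' - y) * I0)) by ring.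
  apply Rmult_le_compat_l; lra.
Qed.

Lemma Zcont w L U M s y : Hyp w L U M -> 0 < s -> continuous (Z w s) y.
Proof.
  intros H Hs. apply filterlim_locally. intros [e He].
  assert (HD : 0 <= U - L + M).
  { pose proof H as [_ [_ [HB [_ [_ HM]]]]]. specialize (HB 0). specialize (HM 0).
    pose proof (Rabs_pos (Derive (Derive w) 0)). lra. }
  pose proof K_pos.
  set (c := K * (U - L + M) + 1).
  assert (Hc : 0 < c) by (unfold c; nra).
  exists (mkposreal (e / c) (Rdiv_lt_0_compat _ _ He Hc)). intros y' Hy'.
  change (Rabs (y' - y) < e / c) in Hy'. change (Rabs (Z w s y' - Z w s y) < e).
  pose proof (Zlip w L U M s y y' H Hs).
  assert (K * (U - L + M) * Rabs (y' - y) <= c * Rabs (y' - y)).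
  { apply Rmult_le_compat_r. apply Rabs_pos. unfold c; lra. }
  assert (c * Rabs (y' - y) < e).
  { apply (Rmult_lt_compat_l c) in Hy'; auto. replace (c * (e / c)) with e in Hy' by (field; lra). lra. }
  lra.
Qed.


Lemma gid s x y z : 0 < s ->
  gauss s z x * gauss s y z = gauss (sqrt 2 * s) y x * gauss (s / sqrt 2) ((x + y) / 2) z.
Proof.
  intros Hs. pose proof sqrt2pi_pos as HP.
  assert (H2 : 0 < sqrt 2) by (apply sqrt_lt_R0; lra).
  assert (E1 : (sqrt 2 * s)^2 = 2 * s^2) by (rewrite Rpow_mult_distr, pow2_sqrt; lra).
  assert (E2 : (s / sqrt 2)^2 = s^2 / 2).
  { unfold Rdiv. rewrite Rpow_mult_distr, pow_inv, pow2_sqrt; lra. }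
  unfold gauss. rewrite E1, E2.
  transitivity (/ (s * sqrt (2 * PI)) * / (s * sqrt (2 * PI)) *
     (exp (- (x - z) ^ 2 / (2 * s ^ 2)) * exp (- (z - y) ^ 2 / (2 * s ^ 2)))). ring.
  transitivity (/ (sqrt 2 * s * sqrt (2 * PI)) * / (s / sqrt 2 * sqrt (2 * PI)) *
     (exp (- (x - y) ^ 2 / (2 * (2 * s ^ 2))) * exp (- (z - (x + y) / 2) ^ 2 / (2 * (s ^ 2 / 2))))).
  2: ring.
  rewrite <- !exp_plus. f_equal. field. split; lra.
  f_equal. field. lra.
Qed.

Lemma final_arith Z Z' A K L U E s2 : 0 < K -> 0 < L ->
  K * L <= Z <= K * U -> K * L <= Z' <= K * U -> Rabs (Z' - Z) <= 3 * E * s2 ->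
  Rabs (A - 1) <= E * s2 / (K * L) ->
  Rabs (Z' / Z * A - 1) <= ((U / L + 3) * E / (K * L)) * s2.
Proof.
  intros HK HL HZ HZ' HD HA.
  assert (HKL : 0 < K * L) by nra.
  assert (HZ0 : 0 < Z) by lra.
  assert (R1b : Rabs (Z' / Z) <= U / L).
  { assert (0 < Z') by lra.
    rewrite Rabs_pos_eq by (unfold Rdiv; apply Rmult_le_pos; [lra | left; apply Rinv_0_lt_compat; lra]).
    assert (Z' * L <= U * Z) by nra.
    replace (Z'/Z) with ((Z'*L) * /(Z*L)) by (field; lra).
    replace (U/L) with ((U*Z) * /(Z*L)) by (field; lra).
    apply Rmult_le_compat_r; [left; apply Rinv_0_lt_compat; nra | lra]. }
  assert (R1d : Rabs (Z' / Z - 1) <= 3 * E * s2 / (K * L)).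
  { replace (Z' / Z - 1) with ((Z' - Z) / Z) by (field; lra).
    unfold Rdiv. rewrite Rabs_mult, (Rabs_pos_eq (/ Z)) by (left; apply Rinv_0_lt_compat; lra).
    apply Rmult_le_compat. apply Rabs_pos. left; apply Rinv_0_lt_compat; lra. auto.
    apply Rinv_le_contravar; lra. }
  replace (Z' / Z * A - 1) with (Z' / Z * (A - 1) + (Z' / Z - 1)) by ring.
  eapply Rle_trans. apply Rabs_triang. rewrite Rabs_mult.
  assert (Rabs (Z' / Z) * Rabs (A - 1) <= U / L * (E * s2 / (K * L))).
  { apply Rmult_le_compat; auto; apply Rabs_pos. }
  replace ((U / L + 3) * E / (K * L) * s2) with (U / L * (E * s2 / (K * L)) + 3 * E * s2 / (K * L))
    by (field; lra).
  lra.
Qed.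

Lemma g_arith Zz wz K L E s2 : 0 < K -> K * L <= Zz -> 0 < L -> Rabs (Zz - K * wz) <= E * s2 ->
  Rabs (wz / Zz - / K) <= E * s2 / (K * (K * L)).
Proof.
  intros HK HZ HL Hd. assert (0 < K * L) by nra. assert (0 < Zz) by lra.
  replace (wz / Zz - / K) with (- (Zz - K * wz) * / (K * Zz)) by (field; lra).
  rewrite Rabs_mult, Rabs_Ropp, (Rabs_pos_eq (/ (K * Zz))) by (left; apply Rinv_0_lt_compat; nra).
  unfold Rdiv. apply Rmult_le_compat; auto. apply Rabs_pos. left; apply Rinv_0_lt_compat; nra.
  apply Rinv_le_contravar; nra.
Qed.


Theorem theorem3 (omega : R) (w : R -> R) (L U : R) :
  0 < omega ->
  (forall x, continuous w x) ->
  0 < L ->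
  (forall x, L <= w x <= U) ->
  (forall x, ex_derive w x) ->
  (forall x, ex_derive (Derive w) x) ->
  (exists M, forall x, Rabs (Derive (Derive w) x) <= M) ->
  exists (v : R -> R -> R -> R) (C : R),
    0 < C /\
    forall x y tau, 0 < tau ->
      p2 w (omega * sqrt tau) x y
        = p1 w (sqrt 2 * (omega * sqrt tau)) x y * v x y tau
      /\ Rabs (v x y tau - 1) <= C * tau.
Proof.
  intros Hom Cw HL HB D1 D2 [M HM].
  assert (H : Hyp w L U M) by (repeat split; auto; apply HB).
  pose proof K_pos as HK. pose proof c0_pos as Hc0.
  set (E := c0 * M * I2).
  set (st := (U / L + 3) * E / (K * L)).
  exists (fun x y tau => Z w (sqrt 2 * (omega * sqrt tau)) y / Z w (omega * sqrt tau) y *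
     int_R (fun z => gauss (omega * sqrt tau / sqrt 2) ((x + y) / 2) z * (w z / Z w (omega * sqrt tau) z))).
  exists (Rabs (st * omega^2) + 1). split. pose proof (Rabs_pos (st * omega^2)); lra.
  intros x y tau Htau.
  set (s := omega * sqrt tau).
  assert (Hs : 0 < s) by (unfold s; apply Rmult_lt_0_compat; auto; apply sqrt_lt_R0; auto).
  assert (H2 : 0 < sqrt 2) by (apply sqrt_lt_R0; lra).
  set (s' := s / sqrt 2). assert (Hs' : 0 < s') by (unfold s'; apply Rdiv_lt_0_compat; auto).
  assert (Hs2 : 0 < sqrt 2 * s) by (apply Rmult_lt_0_compat; auto).
  set (m := (x + y) / 2).
  set (g := fun z => w z / Z w s z).
  assert (HLU : L <= U) by (pose proof (HB 0); lra).
  assert (HKL : 0 < K * L) by nra.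
  assert (Cg : forall z, continuous g z).
  { intro z. unfold g, Rdiv. apply cmul. apply Cw.
    apply continuous_Rinv_comp. apply (Zcont w L U M); auto.
    pose proof (Zb w L U M s z H Hs). lra. }
  assert (Bg : forall z, Rabs (g z) <= U / (K * L)).
  { intro z. unfold g. pose proof (Zb w L U M s z H Hs). pose proof (HB z).
    assert (0 < Z w s z) by lra.
    rewrite Rabs_pos_eq by (unfold Rdiv; apply Rmult_le_pos; [lra | left; apply Rinv_0_lt_compat; lra]).
    unfold Rdiv. apply Rmult_le_compat; try lra. left; apply Rinv_0_lt_compat; lra.
    apply Rinv_le_contravar; lra. }
  pose (Jv := J (fun u => g (s' * u + m))).
  assert (HJ : is_RInt_gen (fun u => phi u * g (s' * u + m)) FM FP Jv).
  { apply (Jex _ (U / (K * L))). intro; apply clin; auto. intro; apply Bg. }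
  pose proof (GA g s' m Jv Hs' Cg HJ) as HA.
  pose (A := c0 * Jv).
  pose proof (guniq _ _ HA) as IA0.
  assert (IA : int_R (fun z => gauss s' m z * g z) = A) by exact IA0.
  pose (cc := w x / Z w s y * gauss (sqrt 2 * s) y x).
  assert (P2 : p2 w s x y = cc * A).
  { unfold p2, int_R. apply guniq. eapply gext; [|apply (gscal _ cc _ HA)].
    intro z. cbv beta. unfold p1. fold (Z w s z). fold (Z w s y).
    symmetry.
    transitivity (w x / Z w s y * (w z / Z w s z) * (gauss s z x * gauss s y z)). unfold Rdiv; ring.
    rewrite (gid s x y z Hs). unfold cc, g, m, s'. ring. }
  pose proof (Zb w L U M s y H Hs) as Zs.
  pose proof (Zb w L U M (sqrt 2 * s) y H Hs2) as Zs2.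
  split.
  - change (omega * sqrt tau) with s. rewrite P2.
    change (p1 w (sqrt 2 * s) x y) with (gauss (sqrt 2 * s) y x * w x / Z w (sqrt 2 * s) y).
    change (gauss (s / sqrt 2) ((x + y) / 2)) with (gauss s' m).
    change (fun z => gauss s' m z * (w z / Z w s z)) with (fun z => gauss s' m z * g z).
    rewrite IA. unfold cc. field. lra.
  - change (omega * sqrt tau) with s.
    change (gauss (s / sqrt 2) ((x + y) / 2)) with (gauss s' m).
    change (fun z => gauss s' m z * (w z / Z w s z)) with (fun z => gauss s' m z * g z).
    rewrite IA.
    assert (Hss : s^2 = omega^2 * tau).
    { unfold s. rewrite Rpow_mult_distr, pow2_sqrt; lra. }
    assert (HD : Rabs (Z w (sqrt 2 * s) y - Z w s y) <= 3 * E * s^2).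
    { pose proof (Zd w L U M s y H Hs). pose proof (Zd w L U M (sqrt 2 * s) y H Hs2).
      assert (E2 : (sqrt 2 * s)^2 = 2 * s^2) by (rewrite Rpow_mult_distr, pow2_sqrt; lra).
      rewrite E2 in H1. fold E in H0, H1.
      replace (Z w (sqrt 2 * s) y - Z w s y) with ((Z w (sqrt 2 * s) y - K * w y) - (Z w s y - K * w y)) by ring.
      eapply Rle_trans. apply Rabs_triang. rewrite Rabs_Ropp. lra. }
    assert (HAd : Rabs (A - 1) <= E * s^2 / (K * L)).
    { set (eta := E * s^2 / (K * (K * L))).
      assert (Hg : forall z, / K - eta <= g (s' * z + m) <= / K + eta).
      { intro z. unfold g. pose proof (Zb w L U M s (s' * z + m) H Hs).
        pose proof (Zd w L U M s (s' * z + m) H Hs). fold E in H1.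
        pose proof (g_arith (Z w s (s' * z + m)) (w (s' * z + m)) K L E (s^2) HK ltac:(lra) HL H1).
        apply Rabs_le_between in H3. unfold eta. lra. }
      pose proof (Jle _ Jv _ _ (fun x => clin g s' m x Cg) HJ Hg) as [J1 J2].
      assert (EK : c0 * I0 = K) by reflexivity.
      assert (Heta : K * eta = E * s^2 / (K * L)) by (unfold eta; field; lra).
      unfold A. apply Rabs_le.
      pose proof I0_pos as HI0.
      assert (Q1 : c0 * ((/ K - eta) * I0) <= c0 * Jv) by (apply Rmult_le_compat_l; lra).
      assert (Q2 : c0 * Jv <= c0 * ((/ K + eta) * I0)) by (apply Rmult_le_compat_l; lra).
      replace (c0 * ((/ K - eta) * I0)) with (1 - K * eta) in Q1 by (rewrite <- EK; field; lra).
      replace (c0 * ((/ K + eta) * I0)) with (1 + K * eta) in Q2 by (rewrite <- EK; field; lra).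
      lra. }
    pose proof (final_arith _ _ A K L U E (s^2) HK HL Zs Zs2 HD HAd) as F.
    fold st in F. rewrite Hss in F.
    eapply Rle_trans. exact F.
    replace (st * (omega^2 * tau)) with ((st * omega^2) * tau) by ring.
    apply Rmult_le_compat_r. lra. pose proof (Rle_abs (st * omega^2)). lra.
Qed.
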